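(* Suppose $(C,\mathbf A)$ (state space $\mathcal X$) and $(\widetilde C,\widetilde{\mathbf A})$ (state space $\widetilde{\mathcal X}$), with common output space $\mathcal Y$, are two output-stable, observable pairs realizing the same formal kernel: $$C(I-Z(z)A)^{-1}(I-A^*Z(w)^* )^{-1}C^*=\widetilde C(I-Z(z)\widetilde A)^{-1}(I-\widetilde A^*Z(w)^* )^{-1}\widetilde C^*.$$ Then $(C,\mathbf A)$ and $(\widetilde C,\widetilde{\mathbf A})$ are unitarily equivalent: there is a unitary $U\colon\mathcal X\to\widetilde{\mathcal X}$ with $C=\widetilde CU$ and $A_j=U^{-1}\widetilde A_jU$ for $j=1,\dots,d$.
   Context: $\mathcal F_d$: free semigroup of words on $\{1,\dots,d\}$; for $v=i_N\cdots i_1$: $v^\top=i_1\cdots i_N$, $\mathbf A^v=A_{i_N}\cdots A_{i_1}$, $z^v=z_{i_N}\cdots z_{i_1}$. The kernel $C(I-Z(z)A)^{-1}(I-A^*Z(w)^* )^{-1}C^*$ denotes the formal series $\sum_{\alpha,\beta\in\mathcal F_d}C\mathbf A^\alpha(\mathbf A^\beta)^*C^*\,z^\alpha w^{\beta^\top}$ in two sets $z,w$ of noncommuting indeterminates; equality of kernels means equality of all coefficients. $(C,\mathbf A)$ is output-stable if $x\mapsto\{C\mathbf A^vx\}_v$ is bounded from $\mathcal X$ into $\ell^2_{\mathcal Y}(\mathcal F_d)$, and observable if $C\mathbf A^vx=0$ for all $v\in\mathcal F_d$ implies $x=0$. *)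

(* Defs.v *)
From HB Require Import structures.
From mathcomp Require Import all_boot all_order all_algebra.
From mathcomp Require Import reals.
From mathcomp.real_closed Require Import complex.
From Stdlib Require Import ClassicalEpsilon.

Set Implicit Arguments.
Unset Strict Implicit.
Unset Printing Implicit Defensive.

Import Order.TTheory GRing.Theory Num.Theory.
Local Open Scope ring_scope.

Section Hilbert.
Variable R : realType.
Local Notation C := R[i].

Definition is_hilbert (X : lmodType C) (ip : X -> X -> C) : Prop :=
  [/\ (forall (a : C) (x y z : X), ip (a *: x + y) z = a * ip x z + ip y z),
      (forall x y : X, ip y x = (ip x y)^*),
      (forall x : X, x != 0 -> 0 < ip x x) &
      (forall u : nat -> X,
         (forall e : C, 0 < e -> exists N : nat, forall m n : nat,
            (N <= m)%N -> (N <= n)%N -> `|ip (u m - u n) (u m - u n)| < e) ->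
         exists x : X, forall e : C, 0 < e -> exists N : nat, forall n : nat,
            (N <= n)%N -> `|ip (u n - x) (u n - x)| < e)].

Definition bounded_op (X Y : lmodType C) (ipX : X -> X -> C) (ipY : Y -> Y -> C)
  (T : X -> Y) : Prop :=
  [/\ (forall (a : C) (x y : X), T (a *: x + y) = a *: T x + T y) &
      exists M : C, forall x : X, ipY (T x) (T x) <= M * ipX x x].

(* Hilbert-space adjoint T^* : <T u, y> = <u, T^* y> (chosen by choice;
   it exists and is unique for bounded T between Hilbert spaces). *)
Definition adj (X Y : lmodType C) (ipX : X -> X -> C) (ipY : Y -> Y -> C)
  (T : X -> Y) : Y -> X :=
  fun y => epsilon (inhabits (0 : X))
             (fun x => forall u : X, ipY (T u) y = ipX u x).

End Hilbert.

(* Words in the free semigroup F_d are sequences over 'I_d; the word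
   v = i_N ... i_1 is the list [:: i_N; ...; i_1], and
   A^v = A_{i_N} o ... o A_{i_1}; the empty word gives the identity. *)
Definition wordop (T : Type) (d : nat) (A : 'I_d -> T -> T) (v : seq 'I_d)
  : T -> T := foldr (fun i f => A i \o f) id v.

Section Pairs.
Variable R : realType.
Local Notation C := R[i].

(* output stability: x |-> (C A^v x)_v is bounded X -> l^2_Y(F_d) *)
Definition output_stable (d : nat) (X Y : lmodType C) (ipX : X -> X -> C)
  (ipY : Y -> Y -> C) (Cop : X -> Y) (A : 'I_d -> X -> X) : Prop :=
  exists M : C, forall (x : X) (s : seq (seq 'I_d)), uniq s ->
    \sum_(v <- s) ipY (Cop (wordop A v x)) (Cop (wordop A v x)) <= M * ipX x x.

Definition observable (d : nat) (X Y : lmodType C) (Cop : X -> Y)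
  (A : 'I_d -> X -> X) : Prop :=
  forall x : X, (forall v : seq 'I_d, Cop (wordop A v x) = 0) -> x = 0.

(* Equality of the two formal kernels (I - Z(z)A)^{-1} ... : equality of
   every coefficient  C A^alpha adj(A^beta) adj(C)  for all words alpha, beta
   (the reindexing beta |-> beta^T is a bijection of F_d). *)
Definition same_kernel (d : nat) (X Xt Y : lmodType C)
  (ipX : X -> X -> C) (ipXt : Xt -> Xt -> C) (ipY : Y -> Y -> C)
  (Cop : X -> Y) (A : 'I_d -> X -> X) (Ct : Xt -> Y) (At : 'I_d -> Xt -> Xt)
  : Prop :=
  forall (alpha beta : seq 'I_d) (y : Y),
    Cop (wordop A alpha (adj ipX ipX (wordop A beta) (adj ipX ipY Cop y)))
    = Ct (wordop At alpha (adj ipXt ipXt (wordop At beta) (adj ipXt ipY Ct y))).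

Definition unitary (X Xt : lmodType C) (ipX : X -> X -> C)
  (ipXt : Xt -> Xt -> C) (U : X -> Xt) : Prop :=
  [/\ (forall (a : C) (x y : X), U (a *: x + y) = a *: U x + U y),
      (forall x y : X, ipXt (U x) (U y) = ipX x y) &
      (forall z : Xt, exists x : X, U x = z)].

End Pairs.

(* Main.v *)
Require Import Defs.
From HB Require Import structures.
From mathcomp Require Import all_boot all_order all_algebra.
From mathcomp Require Import reals.
From mathcomp.real_closed Require Import complex.
From mathcomp Require Import ring.
From mathcomp Require Import classical_sets.
From Stdlib Require Import ClassicalEpsilon.
Set Implicit Arguments.
Unset Strict Implicit.
Unset Printing Implicit Defensive.
Import Order.TTheory GRing.Theory Num.Theory.
Local Open Scope ring_scope.

Section Basic.
Variable R : realType.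
Local Notation C := R[i].

Lemma small_eq0 (c : C) : (forall e : C, 0 < e -> `|c| < e) -> c = 0.
Proof.
move=> H; apply/eqP; apply/negP => /negP c0.
have := H `|c|; rewrite normr_gt0 c0 => /(_ isT).
by rewrite ltxx.
Qed.

Lemma gt0C (e : C) : 0 < e -> exists r : R, 0 < r /\ e = r%:C%C.
Proof.
move=> e0; exists (complex.Re e); have er : e \is Num.real by apply: gtr0_real.
rewrite -ltcR RRe_real //; split => //.

Qed.

Lemma archiC (e : C) : 0 < e -> exists N : nat, forall n, (N <= n)%N -> (n.+1%:R)^-1 < e.
Proof.
move=> /gt0C [r [r0 ->]].
have hr : 0 <= r^-1 by rewrite invr_ge0 ltW.
have hb := archi_boundP hr.
exists (Num.Def.archi_bound r^-1) => n hn.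
have -> : (n.+1%:R : C) = (n.+1%:R : R)%:C%C by rewrite rmorph_nat.
rewrite -fmorphV ltcR -(invrK r) ltf_pV2 ?posrE ?invr_gt0 ?ltr0n //.
apply: (lt_le_trans hb); rewrite ler_nat; exact: leqW.
Qed.

Lemma normD_sq (a b : C) : `|a + b| ^+ 2 <= 2%:R * (`|a| ^+ 2 + `|b| ^+ 2).
Proof.
have h1 : `|a + b| ^+ 2 <= (`|a| + `|b|) ^+ 2.
  by rewrite ler_pXn2r // ?ler_normD // nnegrE ?addr_ge0.
apply: (le_trans h1).
rewrite -subr_ge0.
have -> : 2%:R * (`|a| ^+ 2 + `|b| ^+ 2) - (`|a| + `|b|) ^+ 2 = (`|a| - `|b|)^+2.
  by ring.
apply: real_exprn_even_ge0 => //; apply: realB; apply: normr_real.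
Qed.

End Basic.

Section Hil.
Variable R : realType.
Local Notation C := R[i].
Variables (X : lmodType C) (ip : X -> X -> C).
Hypothesis H : is_hilbert ip.

Lemma ip_linl a x y z : ip (a *: x + y) z = a * ip x z + ip y z.
Proof. by case: H. Qed.

Lemma ip_conj x y : ip y x = (ip x y)^*.
Proof. by case: H. Qed.

Lemma ip0l z : ip 0 z = 0.
Proof.
have := ip_linl 1 0 0 z; rewrite scaler0 addr0 mul1r => h.
by move: h => /(congr1 (fun t => t - ip 0 z)); rewrite subrr addrK.
Qed.

Lemma ipDl x y z : ip (x + y) z = ip x z + ip y z.
Proof. by rewrite -[x]scale1r ip_linl mul1r scale1r. Qed.

Lemma ipZl a x z : ip (a *: x) z = a * ip x z.
Proof. by rewrite -[a *: x]addr0 ip_linl ip0l addr0. Qed.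

Lemma ipNl x z : ip (- x) z = - ip x z.
Proof. by rewrite -scaleN1r ipZl mulN1r. Qed.

Lemma ipBl x y z : ip (x - y) z = ip x z - ip y z.
Proof. by rewrite ipDl ipNl. Qed.

Lemma ip0r z : ip z 0 = 0.
Proof. by rewrite ip_conj ip0l conjC0. Qed.

Lemma ipDr x y z : ip z (x + y) = ip z x + ip z y.
Proof. by rewrite ip_conj ipDl rmorphD (ip_conj x z) (ip_conj y z). Qed.

Lemma ipZr a x z : ip z (a *: x) = a^* * ip z x.
Proof. by rewrite ip_conj ipZl rmorphM (ip_conj x z). Qed.

Lemma ipNr x z : ip z (- x) = - ip z x.
Proof. by rewrite ip_conj ipNl rmorphN (ip_conj x z). Qed.

Lemma ipBr x y z : ip z (x - y) = ip z x - ip z y.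
Proof. by rewrite ipDr ipNr. Qed.

Lemma ip_ge0 x : 0 <= ip x x.
Proof.
have [->|x0] := eqVneq x 0; first by rewrite ip0l.
by case: H => _ _ h _; apply: ltW; apply: h.
Qed.

Lemma ip_eq0 x : ip x x = 0 -> x = 0.
Proof.
move=> h; apply/eqP; apply/negP => /negP x0.
by case: H => _ _ /(_ x x0); rewrite h ltxx.
Qed.

Lemma ip_sep a b : (forall u, ip u a = ip u b) -> a = b.
Proof.
move=> h; apply/eqP; rewrite -subr_eq0; apply/eqP; apply: ip_eq0.
by rewrite ipBr h subrr.
Qed.

Lemma ip_sepl a b : (forall u, ip a u = ip b u) -> a = b.
Proof.
move=> h; apply: ip_sep => u; by rewrite ip_conj h -ip_conj.
Qed.

Lemma ipNN x : ip (- x) (- x) = ip x x.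
Proof. by rewrite ipNl ipNr opprK. Qed.

Lemma ipBsym x y : ip (x - y) (x - y) = ip (y - x) (y - x).
Proof. by rewrite -opprB ipNN. Qed.

Lemma CS x y : `|ip x y| ^+ 2 <= ip x x * ip y y.
Proof.
have [->|y0] := eqVneq y 0; first by rewrite !ip0r normr0 expr0n /= mulr0.
have g0 : 0 < ip y y.
  by rewrite lt_def ip_ge0 andbT; apply/negP => /eqP /ip_eq0 /eqP; rewrite (negbTE y0).
set g := ip y y in g0 *.
have gc : g^* = g by apply/eqP; rewrite -CrealE; apply: gtr0_real.
set t := ip x y / g.
have := ip_ge0 (x - t *: y).
rewrite !ipBl !ipBr !ipZl !ipZr -/g.
rewrite (ip_conj x y) normCK.
have -> : t^* = (ip x y)^* / g by rewrite /t rmorphM fmorphV; congr (_ * _); congr (_^-1); exact: gc.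
set c := ip x y; set c' := c^*.
have -> : ip x x - c' / g * c - (t * c' - t * (c' / g * g)) = ip x x - c * c' / g.
  rewrite /t; field; exact: lt0r_neq0.
by rewrite subr_ge0 ler_pdivrMr.
Qed.

Lemma par a b : ip (a + b) (a + b) + ip (a - b) (a - b) = 2%:R * (ip a a + ip b b).
Proof. rewrite !(ipDl, ipNl, ipDr, ipNr); ring. Qed.

Lemma sq_tri a b : ip (a + b) (a + b) <= 2%:R * (ip a a + ip b b).
Proof. by rewrite -par lerDl ip_ge0. Qed.

Definition conv (u : nat -> X) (x : X) := forall e : C, 0 < e ->
  exists N, forall n, (N <= n)%N -> ip (u n - x) (u n - x) < e.

Definition cauchy (u : nat -> X) := forall e : C, 0 < e ->
  exists N, forall m n, (N <= m)%N -> (N <= n)%N -> ip (u m - u n) (u m - u n) < e.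

Lemma complete u : cauchy u -> exists x, conv u x.
Proof.
move=> hc; case: H => _ _ _ /(_ u) []; last by move=> x hx; exists x => e /hx [N hN]; exists N => n /hN hh; rewrite ger0_norm ?ip_ge0 in hh.
move=> e /hc [N hN]; exists N => m n hm hn; rewrite ger0_norm ?ip_ge0 //; exact: hN.
Qed.

Lemma conv_cauchy u x : conv u x -> cauchy u.
Proof.
move=> hu e e0.
have e40 : 0 < e / 4%:R by rewrite divr_gt0 ?ltr0n.
have [N hN] := hu _ e40; exists N => m n hm hn.
have -> : u m - u n = (u m - x) + (x - u n) by rewrite addrA subrK.
apply: (le_lt_trans (sq_tri _ _)).
rewrite (ipBsym x) .
have -> : e = 2%:R * (e / 4%:R + e / 4%:R) by field.
by rewrite ltr_pM2l ?ltr0n // ltrD // hN.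
Qed.

Definition cconv (c : nat -> C) (l : C) := forall e : C, 0 < e ->
  exists N, forall n, (N <= n)%N -> `|c n - l| < e.

End Hil.

Section CConv.
Variable R : realType.
Local Notation C := R[i].

Lemma cconv_unique (c : nat -> C) l l' : cconv c l -> cconv c l' -> l = l'.
Proof.
move=> h h'; apply/eqP; rewrite -subr_eq0; apply/eqP; apply: small_eq0 => e e0.
have e2 : 0 < e / 2%:R by rewrite divr_gt0 ?ltr0n.
have [N hN] := h _ e2; have [N' hN'] := h' _ e2.
have -> : l - l' = (l - c (maxn N N')) + (c (maxn N N') - l') by rewrite addrA subrK.
apply: (le_lt_trans (ler_normD _ _)).
have -> : e = e / 2%:R + e / 2%:R by field.
by rewrite distrC ltrD // ?hN ?hN' // ?leq_maxl ?leq_maxr.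
Qed.

End CConv.

Lemma lt_sq (R : realType) (a b : R[i]) : 0 <= a -> 0 <= b -> a ^+ 2 < b ^+ 2 -> a < b.
Proof. by move=> a0 b0; rewrite (ltr_pXn2r (n:=2)) // nnegrE. Qed.

Section Cont.
Variable R : realType.
Local Notation C := R[i].
Variables (X : lmodType C) (ip : X -> X -> C).
Hypothesis H : is_hilbert ip.

Lemma conv_ip_l u x y : conv ip u x -> cconv (fun n => ip (u n) y) (ip x y).
Proof.
move=> hu e e0; set K := ip y y.
have K0 : 0 <= K := ip_ge0 H y.
have K1 : 0 < K + 1 by apply: ltr_wpDl K0 ltr01.
set d := e ^+ 2 / (K + 1).
have d0 : 0 < d by rewrite divr_gt0 // exprn_gt0.
have [N hN] := hu d d0; exists N => n hn.
rewrite -(ipBl H) /=.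
apply: lt_sq => //; first exact: ltW.
apply: le_lt_trans (CS H _ _) _.
apply: le_lt_trans (ler_wpM2r K0 (ltW (hN n hn))) _.
by rewrite /d mulrAC ltr_pdivrMr // ltr_pM2l ?exprn_gt0 // ltrDl ltr01.
Qed.

Lemma conv_ip_r u x y : conv ip u x -> cconv (fun n => ip y (u n)) (ip y x).
Proof.
move=> /(conv_ip_l y) h e /h [N hN]; exists N => n /hN.
by rewrite (ip_conj H y) (ip_conj H y x) -rmorphB norm_conjC.
Qed.

End Cont.

Section Proj.
Variable R : realType.
Local Notation C := R[i].
Variables (X : lmodType C) (ip : X -> X -> C).
Hypothesis H : is_hilbert ip.

Lemma Cre (z : C) : 0 <= z -> z = (complex.Re z)%:C%C.
Proof. by move=> z0; rewrite RRe_real // ger0_real. Qed.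

Lemma ip_expand a t : 0 < ip t t ->
  ip (a - (ip a t / ip t t) *: t) (a - (ip a t / ip t t) *: t)
  = ip a a - `|ip a t| ^+ 2 / ip t t.
Proof.
move=> g0; set g := ip t t in g0 *.
have gc : g^* = g by apply/eqP; rewrite -CrealE; apply: gtr0_real.
rewrite !(ipBl H) !(ipBr H) !(ipZl H) !(ipZr H) -/g.
rewrite (ip_conj H a t) normCK.
have -> : (ip a t / g)^* = (ip a t)^* / g.
  by rewrite rmorphM fmorphV; congr (_ * _); congr (_^-1); exact: gc.
set c := ip a t; set c' := c^*.
field; exact: lt0r_neq0.
Qed.

Lemma proj (S : X -> Prop) (S0 : S 0)
  (SD : forall a s t, S s -> S t -> S (a *: s + t)) x :
  exists p, exists s : nat -> X,
    [/\ forall n, S (s n), conv ip s p & forall t, S t -> ip (x - p) t = 0].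
Proof.
pose E : set R := fun r => exists s, S s /\ r = complex.Re (ip (x - s) (x - s)).
have hE : has_inf E.
  split; first by exists (complex.Re (ip x x)); exists 0; rewrite subr0.
  exists 0 => r [s [_ ->]].
  by have := ip_ge0 H (x - s); rewrite lecE => /andP [].
set dl := inf E.
have lbC : forall s, S s -> dl%:C%C <= ip (x - s) (x - s).
  move=> s Ss; rewrite (Cre (ip_ge0 H (x - s))) lecR.
  by apply: (ge_inf hE.2); exists s.
pose eps (n : nat) : C := (n.+1%:R)^-1.
have eps0 n : 0 < eps n by rewrite /eps invr_gt0 ltr0n.
have adh n : exists s, S s /\ ip (x - s) (x - s) < dl%:C%C + eps n.
  have e0 : 0 < (n.+1%:R : R)^-1 by rewrite invr_gt0 ltr0n.
  have [r [s [Ss ->]] hr] := inf_adherent e0 hE.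
  exists s; split => //.
  rewrite (Cre (ip_ge0 H (x - s))).
  have -> : eps n = ((n.+1%:R : R)^-1)%:C%C by rewrite /eps fmorphV rmorph_nat.
  by rewrite -rmorphD ltcR.
pose sq n := proj1_sig (constructive_indefinite_description _ (adh n)).
have Ssq n : S (sq n) by rewrite /sq; case: constructive_indefinite_description => ? [].
have dsq n : ip (x - sq n) (x - sq n) < dl%:C%C + eps n.
  by rewrite /sq; case: constructive_indefinite_description => ? [].
have key m n : ip (sq m - sq n) (sq m - sq n) <= 2%:R * (eps m + eps n).
  have hp := par H (x - sq n) (x - sq m).
  have -> : sq m - sq n = (x - sq n) - (x - sq m).
    by rewrite [RHS]addrC opprB addrA subrK.
  have hm : S (2%:R^-1 *: sq n + 2%:R^-1 *: sq m).
    by apply: (SD) => //; rewrite -[_ *: sq m]addr0; apply: (SD).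
  have -> : ip (x - sq n - (x - sq m)) (x - sq n - (x - sq m)) =
     2%:R * (ip (x - sq n) (x - sq n) + ip (x - sq m) (x - sq m))
     - ip (x - sq n + (x - sq m)) (x - sq n + (x - sq m)).
    by rewrite -hp [RHS]addrC addKr.
  have -> : x - sq n + (x - sq m) = 2%:R *: (x - (2%:R^-1 *: sq n + 2%:R^-1 *: sq m)).
    by rewrite scalerBr scalerDr !scalerA divff ?pnatr_eq0 // !scale1r scaler_nat; rewrite mulr2n; rewrite opprD !addrA; congr (_ + _); rewrite addrAC.
  rewrite (ipZl H) (ipZr H) conjC_nat.
  apply: le_trans (lerB (ler_wpM2l _ (lerD (ltW (dsq n)) (ltW (dsq m))))
                        (ler_wpM2l _ (ler_wpM2l _ (lbC _ hm)))) _ => //.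
  by rewrite le_eqVlt; apply/orP; left; apply/eqP; ring.
have hc : cauchy ip sq.
  move=> e e0; have e4 : 0 < e / 4%:R by rewrite divr_gt0 ?ltr0n.
  have [N hN] := archiC e4; exists N => m n hm hn.
  apply: le_lt_trans (key m n) _.
  have -> : e = 2%:R * (e / 4%:R + e / 4%:R) by field.
  by rewrite ltr_pM2l ?ltr0n // ltrD // hN.
have [p hp] := complete H hc.
exists p, sq; split => // t St.
have [->|t0] := eqVneq t 0; first by rewrite ip0r.
have K0 : 0 < ip t t.
  by rewrite lt_def (ip_ge0 H) andbT; apply/negP => /eqP /(ip_eq0 H) /eqP; rewrite (negbTE t0).
set K := ip t t in K0.
apply: small_eq0 => e e0.
apply: lt_sq => //; first exact: ltW.
set eta := e ^+ 2 / (4%:R * K).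
have eta0 : 0 < eta by rewrite divr_gt0 ?exprn_gt0 // mulr_gt0 ?ltr0n.
have [N1 hN1] := archiC eta0.
have [N2 hN2] := hp _ eta0.
pose n := maxn N1 N2.
have b1 : `|ip (x - sq n) t| ^+ 2 < eta * K.
  have h1 := lbC _ (SD (ip (x - sq n) t / K) _ _ St (Ssq n)).
  rewrite opprD addrA addrAC ip_expand // in h1.
  have h3 : `|ip (x - sq n) t| ^+ 2 / K < eps n.
    move: h1 (dsq n); rewrite -subr_ge0 -(subr_gt0 _ (_ + eps n)) => h1 h2.
    rewrite -subr_gt0; apply: lt_le_trans (ltr_wpDl h1 h2) _; rewrite le_eqVlt; apply/orP; left; apply/eqP; ring.
  rewrite ltr_pdivrMr // in h3.
  apply: lt_trans h3 _; by rewrite ltr_pM2r // hN1 // leq_maxl.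
have b2 : `|ip (x - p) t - ip (x - sq n) t| ^+ 2 < eta * K.
  have -> : ip (x - p) t - ip (x - sq n) t = ip (sq n - p) t.
    by rewrite -(ipBl H); congr (ip _ t); rewrite opprB addrC addrA subrK.
  apply: le_lt_trans (CS H _ _) _.
  by rewrite -/K ltr_pM2r // hN2 // leq_maxr.
have -> : ip (x - p) t = ip (x - sq n) t + (ip (x - p) t - ip (x - sq n) t).
  by rewrite [RHS]addrC subrK.
apply: le_lt_trans (normD_sq _ _) _.
have -> : e ^+ 2 = 2%:R * (eta * K + eta * K).
  by rewrite /eta; field; rewrite lt0r_neq0.
by rewrite ltr_pM2l ?ltr0n // ltrD.
Qed.

End Proj.

Section Riesz.
Variable R : realType.
Local Notation C := R[i].
Variables (X : lmodType C) (ip : X -> X -> C).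
Hypothesis H : is_hilbert ip.

Lemma bound_norm (Y : lmodType C) (ipY : Y -> Y -> C) (HY : is_hilbert ipY)
  (T : X -> Y) (M : C) :
  (forall x, ipY (T x) (T x) <= M * ip x x) ->
  forall x, ipY (T x) (T x) <= `|M| * ip x x.
Proof.
move=> hM x; have h := hM x.
have h0 : 0 <= M * ip x x := le_trans (ip_ge0 HY _) h.
by rewrite -(ger0_norm (ip_ge0 H x)) -normrM ger0_norm.
Qed.

Lemma riesz (phi : X -> C) (lin : forall a u v, phi (a *: u + v) = a * phi u + phi v)
  (M : C) (bd : forall u, `|phi u| ^+ 2 <= M * ip u u) :
  exists z, forall u, phi u = ip u z.
Proof.
have phi0 : phi 0 = 0.
  have := lin 1 0 0; rewrite scaler0 addr0 mul1r => h.
  by move: h => /(congr1 (fun t => t - phi 0)); rewrite subrr addrK.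
have phiB u v : phi (u - v) = phi u - phi v.
  by rewrite -scaleN1r addrC lin mulN1r addrC.
have phiZ a u : phi (a *: u) = a * phi u.
  by rewrite -[a *: u]addr0 lin phi0 addr0.
have bd' u : `|phi u| ^+ 2 <= (`|M| + 1) * ip u u.
  have h := bd u.
  have h0 : 0 <= M * ip u u := le_trans (exprn_ge0 2 (normr_ge0 _)) h.
  apply: (le_trans h); rewrite -(ger0_norm h0) normrM (ger0_norm (ip_ge0 H u)).
  by rewrite ler_wpM2r ?(ip_ge0 H) // lerDl ler01.
have M0 : 0 < `|M| + 1 by apply: ltr_wpDl (normr_ge0 _) ltr01.
case: (Classical_Prop.classic (forall u, phi u = 0)) => [h0|].
  by exists 0 => u; rewrite h0 (ip0r H).
move=> /Classical_Pred_Type.not_all_ex_not [u0 hu0].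
have S0 : phi 0 = 0 := phi0.
have SD : forall a s t, phi s = 0 -> phi t = 0 -> phi (a *: s + t) = 0.
  by move=> a s t hs ht; rewrite lin hs ht mulr0 addr0.
have [p [s [Ss hsp orth]]] := proj H S0 SD u0.
have pp : phi p = 0.
  apply: small_eq0 => e e0; apply: lt_sq => //; first exact: ltW.
  have ee : 0 < e ^+ 2 / (`|M| + 1) by rewrite divr_gt0 // exprn_gt0.
  have [N hN] := hsp _ ee.
  have -> : phi p = phi (p - s N) by rewrite phiB Ss subr0.
  apply: le_lt_trans (bd' _) _.
  by rewrite mulrC -ltr_pdivlMr // (ipBsym H) hN.
set w := u0 - p.
have pw : phi w = phi u0 by rewrite phiB pp subr0.
have pw0 : phi w != 0 by rewrite pw; apply/eqP.
have w0 : w != 0 by apply: contra pw0 => /eqP ->; rewrite phi0.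
have K0 : 0 < ip w w.
  by rewrite lt_def (ip_ge0 H) andbT; apply/negP => /eqP /(ip_eq0 H) /eqP; rewrite (negbTE w0).
exists ((phi w / ip w w)^* *: w) => u.
rewrite (ipZr H) conjCK.
have hv : phi (u - (phi u / phi w) *: w) = 0.
  by rewrite phiB phiZ divfK ?subrr.
have := orth _ hv; rewrite -/w => h.
have h' : ip (u - (phi u / phi w) *: w) w = 0 by rewrite (ip_conj H) h conjC0.
rewrite (ipBl H) (ipZl H) in h'.
move/eqP: h'; rewrite subr_eq0 => /eqP ->.
field; apply/andP; split => //; exact: lt0r_neq0.
Qed.

End Riesz.

Section Adj.
Variable R : realType.
Local Notation C := R[i].
Variables (X Y : lmodType C) (ipX : X -> X -> C) (ipY : Y -> Y -> C).
Hypotheses (HX : is_hilbert ipX) (HY : is_hilbert ipY).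

Lemma adj_spec (T : X -> Y) : bounded_op ipX ipY T ->
  forall y u, ipY (T u) y = ipX u (adj ipX ipY T y).
Proof.
move=> [lin [M hM]] y; apply: (epsilon_spec (inhabits (0 : X)) (fun x => forall u, ipY (T u) y = ipX u x)).
apply: (@riesz R X ipX HX (fun u => ipY (T u) y) _ (M * ipY y y)).
  by move=> a u v; rewrite lin (ipDl HY) (ipZl HY).
move=> u; apply: le_trans (CS HY _ _) _.
by rewrite mulrAC ler_wpM2r ?(ip_ge0 HY).
Qed.

End Adj.

Section Word.
Variable R : realType.
Local Notation C := R[i].
Variables (X : lmodType C) (ip : X -> X -> C).
Hypothesis H : is_hilbert ip.

Lemma wordop_bounded d (A : 'I_d -> X -> X) :
  (forall j, bounded_op ip ip (A j)) -> forall v, bounded_op ip ip (wordop A v).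
Proof.
move=> hA; elim=> [|i v [lin [M hM]]].
  by split => //; exists 1 => x; rewrite mul1r.
have [lini [Mi hMi]] := hA i.
split; first by move=> a x y /=; rewrite lin lini.
exists (`|Mi| * M) => x /=.
apply: le_trans (bound_norm H H hMi _) _.
by rewrite -mulrA ler_wpM2l.
Qed.

End Word.

Section Lin.
Variable R : realType.
Local Notation C := R[i].
Variables (V W : lmodType C) (f : V -> W).
Hypothesis hf : forall a x y, f (a *: x + y) = a *: f x + f y.

Lemma lin0 : f 0 = 0.
Proof.
have := hf 1 0 0; rewrite scaler0 addr0 scale1r => h.
by move: h => /(congr1 (fun t => t - f 0)); rewrite subrr addrK.
Qed.

Lemma linD x y : f (x + y) = f x + f y.
Proof. by have := hf 1 x y; rewrite !scale1r. Qed.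

Lemma linZ a x : f (a *: x) = a *: f x.
Proof. by rewrite -[a *: x]addr0 hf lin0 addr0. Qed.

Lemma linB x y : f (x - y) = f x - f y.
Proof. by rewrite linD -scaleN1r linZ scaleN1r. Qed.

End Lin.

Lemma wordop_rcons (T : Type) d (A : 'I_d -> T -> T) v j z :
  wordop A (rcons v j) z = wordop A v (A j z).
Proof. by elim: v => [|i v IH] //=; rewrite /= IH. Qed.

Lemma cconv_ext (R : realType) (c c' : nat -> R[i]) l :
  (forall n, c n = c' n) -> cconv c l -> cconv c' l.
Proof. by move=> h hc e /hc [N hN]; exists N => n /hN; rewrite h. Qed.

Section Main.
Variable R : realType.
Local Notation C := R[i].
Variables (d : nat) (X Xt Y : lmodType C)
  (ipX : X -> X -> C) (ipXt : Xt -> Xt -> C) (ipY : Y -> Y -> C)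
  (Cop : X -> Y) (A : 'I_d -> X -> X) (Ct : Xt -> Y) (At : 'I_d -> Xt -> Xt).
Hypotheses (HX : is_hilbert ipX) (HXt : is_hilbert ipXt) (HY : is_hilbert ipY)
  (bC : bounded_op ipX ipY Cop) (bA : forall j, bounded_op ipX ipX (A j))
  (bCt : bounded_op ipXt ipY Ct) (bAt : forall j, bounded_op ipXt ipXt (At j))
  (obs : observable Cop A) (obst : observable Ct At)
  (sk : same_kernel ipX ipXt ipY Cop A Ct At).

Definition kk (q : seq 'I_d * Y) : X := adj ipX ipX (wordop A q.1) (adj ipX ipY Cop q.2).
Definition kt (q : seq 'I_d * Y) : Xt := adj ipXt ipXt (wordop At q.1) (adj ipXt ipY Ct q.2).

Lemma kk_spec u q : ipX u (kk q) = ipY (Cop (wordop A q.1 u)) q.2.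
Proof.
by rewrite /kk -(adj_spec HX HX (wordop_bounded HX bA q.1)) -(adj_spec HX HY bC).
Qed.

Lemma kt_spec u q : ipXt u (kt q) = ipY (Ct (wordop At q.1 u)) q.2.
Proof.
by rewrite /kt -(adj_spec HXt HXt (wordop_bounded HXt bAt q.1)) -(adj_spec HXt HY bCt).
Qed.

Lemma key q q' : ipXt (kt q) (kt q') = ipX (kk q) (kk q').
Proof. by rewrite kk_spec kt_spec /kk /kt sk. Qed.

Definition sumk (L : seq (C * (seq 'I_d * Y))) : X := \sum_(q <- L) q.1 *: kk q.2.
Definition sumkt (L : seq (C * (seq 'I_d * Y))) : Xt := \sum_(q <- L) q.1 *: kt q.2.

Lemma ip_sum_l (V : lmodType C) (ip : V -> V -> C) (HV : is_hilbert ip) (f : seq 'I_d * Y -> V) L w :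
  ip (\sum_(q <- L) q.1 *: f q.2) w = \sum_(q <- L) q.1 * ip (f q.2) w.
Proof.
elim: L => [|q L IH]; first by rewrite !big_nil (ip0l HV).
by rewrite !big_cons (ipDl HV) (ipZl HV) IH.
Qed.

Lemma ip_sum_r (V : lmodType C) (ip : V -> V -> C) (HV : is_hilbert ip) (f : seq 'I_d * Y -> V) L w :
  ip w (\sum_(q <- L) q.1 *: f q.2) = \sum_(q <- L) q.1^* * ip w (f q.2).
Proof.
elim: L => [|q L IH]; first by rewrite !big_nil (ip0r HV).
by rewrite !big_cons (ipDr HV) (ipZr HV) IH.
Qed.

Lemma key_sum L L' : ipXt (sumkt L) (sumkt L') = ipX (sumk L) (sumk L').
Proof.
rewrite /sumkt /sumk (ip_sum_l HXt) (ip_sum_l HX); apply: eq_bigr => q _.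
rewrite (ip_sum_r HXt) (ip_sum_r HX); congr (_ * _); apply: eq_bigr => q' _.
by rewrite key.
Qed.

Lemma key_mixed L q : ipXt (sumkt L) (kt q) = ipX (sumk L) (kk q).
Proof.
have := key_sum L [:: (1, q)].
by rewrite /sumkt /sumk !big_cons !big_nil !addr0 !scale1r.
Qed.

Definition inS (s : X) := exists L, s = sumk L.

Lemma dense x : exists s : nat -> X, (forall n, inS (s n)) /\ conv ipX s x.
Proof.
have S0 : inS 0 by exists [::]; rewrite /sumk big_nil.
have SD : forall a s t, inS s -> inS t -> inS (a *: s + t).
  move=> a s t [L ->] [L' ->]; exists ([seq (a * q.1, q.2) | q <- L] ++ L').
  rewrite /sumk big_cat big_map scaler_sumr; congr (_ + _).
  by apply: eq_bigr => q _; rewrite scalerA.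
have [p [s [Ss hsp orth]]] := proj HX S0 SD x.
suff -> : x = p by exists s.
apply/eqP; rewrite -subr_eq0; apply/eqP; apply: obs => v.
set z := Cop (wordop A v (x - p)).
apply: (ip_eq0 HY).
have : ipX (x - p) (kk (v, z)) = 0.
  apply: orth; exists [:: (1, (v, z))]; by rewrite /sumk big_cons big_nil addr0 scale1r.
by rewrite kk_spec.
Qed.

Definition PP x xt := forall v, Ct (wordop At v xt) = Cop (wordop A v x).

Lemma PP_sum x xt L : PP x xt -> ipXt xt (sumkt L) = ipX x (sumk L).
Proof.
move=> hP; rewrite /sumkt /sumk (ip_sum_r HXt) (ip_sum_r HX).
by apply: eq_bigr => q _; rewrite kk_spec kt_spec hP.
Qed.

Lemma ipsub (V : lmodType C) (ip : V -> V -> C) (HV : is_hilbert ip) a b :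
  ip (a - b) (a - b) = ip a a - ip a b - ip b a + ip b b.
Proof. rewrite !(ipBl HV) !(ipBr HV); ring. Qed.

Lemma exist_PP x : exists xt, PP x xt /\
  exists Ls : nat -> seq (C * (seq 'I_d * Y)),
    conv ipX (fun n => sumk (Ls n)) x /\ conv ipXt (fun n => sumkt (Ls n)) xt.
Proof.
have [s [Ss hs]] := dense x.
pose Ls n := proj1_sig (constructive_indefinite_description _ (Ss n)).
have hLs n : s n = sumk (Ls n).
  by rewrite /Ls; case: constructive_indefinite_description.
have hs' : conv ipX (fun n => sumk (Ls n)) x.
  by move=> e /hs [N hN]; exists N => n /hN; rewrite hLs.
have hc : cauchy ipXt (fun n => sumkt (Ls n)).
  move=> e /(conv_cauchy HX hs') [N hN]; exists N => m n hm hn.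
  by rewrite (ipsub HXt) !key_sum -(ipsub HX); apply: hN.
have [xt hxt] := complete HXt hc.
exists xt; split; last by exists Ls.
move=> v; apply: (ip_sepl HY) => y.
rewrite -(kt_spec xt (v, y)) -(kk_spec x (v, y)).
apply: (cconv_unique (conv_ip_l HXt (kt (v, y)) hxt)).
apply: cconv_ext (conv_ip_l HX (kk (v, y)) hs') => n.
by rewrite key_mixed.
Qed.

Lemma PP_unique x a b : PP x a -> PP x b -> a = b.
Proof.
move=> ha hb; apply/eqP; rewrite -subr_eq0; apply/eqP; apply: obst => v.
have [lC _] := bCt; have [lW _] := wordop_bounded HXt bAt v.
by rewrite (linB lW) (linB lC) ha hb subrr.
Qed.

Lemma PP_iso x x' xt xt' : PP x xt -> PP x' xt' -> ipXt xt xt' = ipX x x'.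
Proof.
move=> h h'; have [xt'' [h'' [Ls [c1 c2]]]] := exist_PP x'.
have e := PP_unique h' h''; subst xt''.
apply: (cconv_unique (conv_ip_r HXt xt c2)).
apply: cconv_ext (conv_ip_r HX x c1) => n.
by rewrite (PP_sum _ h).
Qed.

End Main.

Theorem theorem2p13 (R : realType) (d : nat) (X Xt Y : lmodType R[i])
  (ipX : X -> X -> R[i]) (ipXt : Xt -> Xt -> R[i]) (ipY : Y -> Y -> R[i])
  (Cop : X -> Y) (A : 'I_d -> X -> X) (Ct : Xt -> Y) (At : 'I_d -> Xt -> Xt) :
  is_hilbert ipX -> is_hilbert ipXt -> is_hilbert ipY ->
  bounded_op ipX ipY Cop -> (forall j, bounded_op ipX ipX (A j)) ->
  bounded_op ipXt ipY Ct -> (forall j, bounded_op ipXt ipXt (At j)) ->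
  output_stable ipX ipY Cop A -> observable Cop A ->
  output_stable ipXt ipY Ct At -> observable Ct At ->
  same_kernel ipX ipXt ipY Cop A Ct At ->
  exists U : X -> Xt, exists Uinv : Xt -> X,
    [/\ unitary ipX ipXt U, cancel U Uinv, cancel Uinv U,
        (forall x : X, Cop x = Ct (U x)) &
        (forall (j : 'I_d) (x : X), A j x = Uinv (At j (U x)))].
Proof.
move=> HX HXt HY bC bA bCt bAt _ obs _ obst sk.
have sk' : same_kernel ipXt ipX ipY Ct At Cop A by move=> al be y; rewrite sk.
have PPs x xt : PP Cop A Ct At x xt -> PP Ct At Cop A xt x by move=> h v; rewrite h.
have PPs' x xt : PP Ct At Cop A xt x -> PP Cop A Ct At x xt by move=> h v; rewrite h.
pose U x := epsilon (inhabits (0 : Xt)) (PP Cop A Ct At x).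
pose Ui xt := epsilon (inhabits (0 : X)) (PP Ct At Cop A xt).
have hU x : PP Cop A Ct At x (U x).
  apply: epsilon_spec.
  have [xt [h _]] := exist_PP HX HXt HY bC bA bCt bAt obs sk x; by exists xt.
have hUi xt : PP Ct At Cop A xt (Ui xt).
  apply: epsilon_spec.
  have [x [h _]] := exist_PP HXt HX HY bCt bAt bC bA obst sk' xt; by exists x.
have cUUi : cancel U Ui by move=> x; apply: (PP_unique HX bC bA obs (hUi (U x)) (PPs _ _ (hU x))).
have cUiU : cancel Ui U by move=> xt; apply: (PP_unique HXt bCt bAt obst (hU (Ui xt)) (PPs' _ _ (hUi xt))).
exists U, Ui; split => //.
- split.
  + move=> a x y; apply: (PP_unique HXt bCt bAt obst (hU (a *: x + y))) => v.
    have [lC _] := bCt; have [lW _] := wordop_bounded HXt bAt v.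
    have [lC0 _] := bC; have [lW0 _] := wordop_bounded HX bA v.
    by rewrite lW lC !hU lW0 lC0.
  + by move=> x y; apply: (PP_iso HX HXt HY bC bA bCt bAt obs obst sk (hU x) (hU y)).
  + by move=> z; exists (Ui z); apply: cUiU.
- by move=> x; have := hU x [::].
- move=> j x.
  have e : U (A j x) = At j (U x).
    apply: (PP_unique HXt bCt bAt obst (hU (A j x))) => v.
    by rewrite -!wordop_rcons hU.
  by rewrite -e cUUi.
Qed.
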